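(* Let $\nu\in\mathbb{N}$, let $(X,d)$ be a $\nu$-generalized metric space, let $T:X\to X$, and let $m:X\times X\to[0,\infty)$. Suppose that for some $x\in X$ the following hold: (i) for every $\epsilon>0$ there exist $\delta>0$ and $N\in\mathbb{Z}^+$ such that for all $p,q\ge N$, $m(T^px,T^qx)<\delta+\epsilon$ implies $d(T^{p+1}x,T^{q+1}x)\le\epsilon$; (ii) for any two subsequences $\{T^{p_i}x\}$ and $\{T^{q_i}x\}$ of $\{T^nx\}$, $\limsup_{i\to\infty} m(T^{p_i}x,T^{q_i}x)\le\limsup_{i\to\infty} d(T^{p_i}x,T^{q_i}x)$; (iii) $d(T^nx,T^{n+1}x)+d(T^nx,T^{n+2}x)\to0$ as $n\to\infty$. Then $\{T^nx\}$ is a Cauchy sequence.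
   Context: Let $X$ be a nonempty set, $d:X\times X\to[0,\infty)$, and $\nu\in\mathbb{N}$. $(X,d)$ is a $\nu$-generalized metric space if: (1) $d(x,y)=0$ iff $x=y$; (2) $d(x,y)=d(y,x)$ for all $x,y$; (3) $d(x,y)\le d(x,u_1)+d(u_1,u_2)+\dots+d(u_\nu,y)$ for every set $\{x,u_1,\dots,u_\nu,y\}$ of $\nu+2$ pairwise distinct elements of $X$. A sequence $\{x_n\}$ in $X$ is Cauchy if $\lim_{n\to\infty}\sup\{d(x_n,x_{n+1+m}): m\in\mathbb{Z}^+\}=0$, where $\mathbb{Z}^+$ denotes the nonnegative integers. A subsequence $\{x_{p_i}\}$ means $p_1<p_2<\cdots$. $T^n$ denotes the $n$-th iterate of $T$. *)

(* Defs.v *)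
From Stdlib Require Import Reals Lra Lia List.
Import ListNotations.
Open Scope R_scope.

Fixpoint path_len {X : Type} (d : X -> X -> R) (l : list X) : R :=
  match l with
  | a :: ((b :: _) as t) => d a b + path_len d t
  | _ => 0
  end.

Definition gen_metric (nu : nat) {X : Type} (d : X -> X -> R) : Prop :=
  (forall x y, 0 <= d x y) /\
  (forall x y, d x y = 0 <-> x = y) /\
  (forall x y, d x y = d y x) /\
  (forall (x y : X) (us : list X), length us = nu ->
     NoDup (x :: us ++ [y]) -> d x y <= path_len d (x :: us ++ [y])).

Fixpoint iter {X : Type} (n : nat) (T : X -> X) (x : X) : X :=
  match n with
  | O => x
  | S k => T (iter k T x)
  end.

Inductive ereal : Type := EFin (r : R) | EPInf | ENInf.

Definition ele (a b : ereal) : Prop :=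
  match a, b with
  | ENInf, _ => True
  | _, EPInf => True
  | EFin x, EFin y => x <= y
  | _, _ => False
  end.

Definition is_limsup (a : nat -> R) (L : ereal) : Prop :=
  match L with
  | EFin l =>
      (forall eps, 0 < eps -> exists N, forall i, (N <= i)%nat -> a i < l + eps) /\
      (forall eps, 0 < eps -> forall N, exists i, (N <= i)%nat /\ l - eps < a i)
  | EPInf => forall M N, exists i, (N <= i)%nat /\ M < a i
  | ENInf => forall M, exists N, forall i, (N <= i)%nat -> a i < M
  end.

(* limsup a <= limsup b (every real sequence has a unique limsup in ereal). *)
Definition limsup_le (a b : nat -> R) : Prop :=
  forall La Lb, is_limsup a La -> is_limsup b Lb -> ele La Lb.

Definition strictly_increasing (p : nat -> nat) : Prop :=
  forall i, (p i < p (S i))%nat.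

Definition gm_cauchy {X : Type} (d : X -> X -> R) (x : nat -> X) : Prop :=
  forall eps, 0 < eps -> exists N, forall n, (N <= n)%nat ->
    forall m, d (x n) (x (n + 1 + m)%nat) <= eps.

(* Main.v *)
Require Import Defs.
From Stdlib Require Import Reals List Lra Lia Arith Classical ClassicalEpsilon.
From Coquelicot Require Rbar Lim_seq.
Import ListNotations.
Open Scope R_scope.

Lemma path_map_seq {X} (d : X -> X -> R) (F : nat -> X) len : forall a alpha,
  (forall i, (a <= i < a + len)%nat -> d (F i) (F (S i)) <= alpha) ->
  path_len d (map F (seq a (S len))) <= INR len * alpha.
Proof.
  induction len as [|len IH]; intros a alpha H.
  - simpl. lra.
  - change (path_len d (map F (seq a (S (S len)))))
      with (d (F a) (F (S a)) + path_len d (map F (seq (S a) (S len)))).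
    rewrite S_INR.
    assert (H1 := H a ltac:(lia)).
    assert (H2 := IH (S a) alpha ltac:(intros i Hi; apply H; lia)).
    lra.
Qed.

Lemma tri_lemma {X} nu (d : X -> X -> R) (F : nat -> X) :
  gen_metric nu d ->
  (forall i j, (i < S (S nu))%nat -> (j < S (S nu))%nat -> F i = F j -> i = j) ->
  d (F 0%nat) (F (S nu)) <= path_len d (map F (seq 0 (S (S nu)))).
Proof.
  intros (_&_&_&Htri) Hinj.
  assert (E : F 0%nat :: map F (seq 1 nu) ++ [F (S nu)] = map F (seq 0 (S (S nu)))).
  { change (seq 0 (S (S nu))) with (0%nat :: seq 1 (S nu)).
    rewrite (seq_S nu 1). cbn [map]. rewrite map_app. reflexivity. }
  rewrite <- E. apply Htri.
  - rewrite length_map, length_seq. reflexivity.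
  - rewrite E. apply NoDup_map_NoDup_ForallPairs; [|apply seq_NoDup].
    intros a b Ha Hb. apply in_seq in Ha. apply in_seq in Hb. apply Hinj; lia.
Qed.

Lemma step_bound {X} (d : X -> X -> R) (Y : nat -> X) N alpha :
  (forall a b, d a b = d b a) ->
  (forall p, (N <= p)%nat -> d (Y p) (Y (S p)) <= alpha /\ d (Y p) (Y (S (S p))) <= alpha) ->
  forall u v, (N <= u)%nat -> (N <= v)%nat ->
  (v = u+1 \/ v = u+2 \/ u = v+1 \/ u = v+2)%nat -> d (Y u) (Y v) <= alpha.
Proof.
  intros Hs H u v Hu Hv [E|[E|[E|E]]]; subst.
  - rewrite Nat.add_1_r. apply H; lia.
  - replace (u+2)%nat with (S (S u)) by lia. apply H; lia.
  - rewrite Hs. rewrite Nat.add_1_r. apply H; lia.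
  - rewrite Hs. replace (v+2)%nat with (S (S v)) by lia. apply H; lia.
Qed.

Ltac bdestr := repeat match goal with
  | |- context [Nat.ltb ?x ?y] => destruct (Nat.ltb_spec x y)
  | |- context [Nat.leb ?x ?y] => destruct (Nat.leb_spec x y)
  | |- context [Nat.eqb ?x ?y] => destruct (Nat.eqb_spec x y)
  end.

Lemma hairpin {X} nu (d : X -> X -> R) (Y : nat -> X) N alpha :
  gen_metric nu d ->
  (forall i j, Y i = Y j -> i = j) ->
  (forall p, (N <= p)%nat -> d (Y p) (Y (S p)) <= alpha /\ d (Y p) (Y (S (S p))) <= alpha) ->
  forall n k, (N <= n)%nat -> (1 <= k <= S nu)%nat ->
  d (Y n) (Y (n + k)%nat) <= INR (S nu) * alpha.
Proof.
  intros Hg Hinj Hsm n k Hn Hk.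
  set (s := (S (S nu) - k)%nat).
  assert (Ha : exists a, (s = 2*a \/ s = 2*a+1)%nat).
  { destruct (Nat.Even_or_Odd s) as [[a Ha]|[a Ha]]; exists a; lia. }
  destruct Ha as [a Ha].
  set (h := fun i => if Nat.ltb i k then (n + i)%nat else
      (n + k + (if Nat.leb (i - k + 1) a then 2*(i-k+1) - 1 else 2*(s - (i-k+1))))%nat).
  assert (H0 : h 0%nat = n) by (unfold h; bdestr; lia).
  assert (H1 : h (S nu) = (n + k)%nat) by (unfold h; bdestr; lia).
  pose proof (tri_lemma nu d (fun i => Y (h i)) Hg) as T.
  cbv beta in T. rewrite H0, H1 in T.
  eapply Rle_trans; [apply T|].
  - intros i j Hi Hj E. apply Hinj in E. revert E. unfold h. bdestr; lia.
  - apply path_map_seq. intros i Hi. destruct Hg as (_&_&Hs&_).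
    apply (step_bound d Y N alpha Hs Hsm); unfold h; bdestr; lia.
Qed.

Lemma min_ex (P : nat -> Prop) t : P t -> exists q, P q /\ forall r, (r < q)%nat -> ~ P r.
Proof.
  induction t as [t IH] using (well_founded_ind lt_wf). intros Ht.
  destruct (classic (exists r, (r < t)%nat /\ P r)) as [[r [Hr Pr]]|C].
  - exact (IH r Hr Pr).
  - exists t. split; auto. intros r Hr Pr. apply C. eauto.
Qed.

Definition conv (l : Rbar.Rbar) : ereal :=
  match l with Rbar.Finite r => EFin r | Rbar.p_infty => EPInf | Rbar.m_infty => ENInf end.

Lemma conv_ok u l : Lim_seq.is_LimSup_seq u l -> is_limsup u (conv l).
Proof.
  destruct l as [r| |]; simpl; auto.
  intros H. split.
  - intros eps He. exact (proj2 (H (mkposreal eps He))).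
  - intros eps He N. exact (proj1 (H (mkposreal eps He)) N).
Qed.

Lemma final_contra (u v : nat -> R) c1 c2 :
  (forall i, c1 <= u i) -> (forall i, v i <= c2) -> (forall i, 0 <= v i) -> c2 < c1 ->
  limsup_le u v -> False.
Proof.
  intros Hu Hv Hv0 Hc Hle.
  destruct (Lim_seq.ex_LimSup_seq u) as [La HLa].
  destruct (Lim_seq.ex_LimSup_seq v) as [Lb HLb].
  pose proof (Hle _ _ (conv_ok _ _ HLa) (conv_ok _ _ HLb)) as E.
  apply conv_ok in HLa. apply conv_ok in HLb.
  assert (Hb1 : conv Lb <> EPInf).
  { intro Q. rewrite Q in HLb. destruct (HLb c2 0%nat) as (i&_&Hi). specialize (Hv i). lra. }
  assert (Hb2 : conv Lb <> ENInf).
  { intro Q. rewrite Q in HLb. destruct (HLb 0) as (N&HN). specialize (HN N (le_n _)). specialize (Hv0 N). lra. }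
  destruct (conv La) as [l| |] eqn:EA; destruct (conv Lb) as [l'| |] eqn:EB; simpl in *;
    try congruence; try tauto.
  - destruct HLa as [HA _]. destruct HLb as [_ HB].
    destruct (HA ((c1-c2)/2) ltac:(lra)) as [N HN].
    destruct (HB ((c1-c2)/2) ltac:(lra) 0%nat) as (i&_&Hi).
    specialize (HN N (le_n _)). specialize (Hu N). specialize (Hv i). lra.
  - destruct (HLa c1) as (N&HN). specialize (HN N (le_n _)). specialize (Hu N). lra.
Qed.

Fixpoint buildseq (g : nat -> nat * nat) (i : nat) : nat * nat :=
  match i with
  | O => g O
  | S k => g (S (Nat.max (fst (buildseq g k)) (snd (buildseq g k))))
  end.

Theorem theorem3p3 (nu : nat) (X : Type) (d : X -> X -> R) (T : X -> X)
  (m : X -> X -> R) (x : X) :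
  (1 <= nu)%nat ->
  gen_metric nu d ->
  (forall a b, 0 <= m a b) ->
  (forall eps, 0 < eps -> exists delta N, 0 < delta /\
     forall p q, (N <= p)%nat -> (N <= q)%nat ->
       m (iter p T x) (iter q T x) < delta + eps ->
       d (iter (S p) T x) (iter (S q) T x) <= eps) ->
  (forall p q : nat -> nat, strictly_increasing p -> strictly_increasing q ->
     limsup_le (fun i => m (iter (p i) T x) (iter (q i) T x))
               (fun i => d (iter (p i) T x) (iter (q i) T x))) ->
  Un_cv (fun n => d (iter n T x) (iter (S n) T x) + d (iter n T x) (iter (S (S n)) T x)) 0 ->
  gm_cauchy d (fun n => iter n T x).
Proof.
  intros Hnu Hg Hm0 Hi Hii Hcv.
  pose proof Hg as (Hd0 & Hdeq & Hsym & _).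
  set (Y := fun n => iter n T x) in *.
  assert (HYS : forall n, Y (S n) = T (Y n)) by reflexivity.
  assert (Hsmall : forall alpha, 0 < alpha -> exists N, forall p, (N <= p)%nat ->
            d (Y p) (Y (S p)) <= alpha /\ d (Y p) (Y (S (S p))) <= alpha).
  { intros alpha Ha. destruct (Hcv alpha Ha) as [N HN]. exists N. intros p Hp.
    specialize (HN p Hp). unfold R_dist in HN. rewrite Rminus_0_r in HN.
    pose proof (Rle_abs (d (Y p) (Y (S p)) + d (Y p) (Y (S (S p))))).
    pose proof (Hd0 (Y p) (Y (S p))). pose proof (Hd0 (Y p) (Y (S (S p)))).
    cbv beta in HN. fold (Y p) (Y (S p)) (Y (S (S p))) in HN. lra. }
  destruct (classic (exists i j, (i < j)%nat /\ Y i = Y j)) as [[i [j [Hij E]]]|NI].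
  -
    assert (Hshift : forall t, Y (i+t)%nat = Y (j+t)%nat).
    { induction t as [|t IH]. { rewrite !Nat.add_0_r; exact E. }
      rewrite <- !plus_n_Sm, !HYS, IH. reflexivity. }
    assert (Hper : forall c t, Y (i+t+c*(j-i))%nat = Y (i+t)%nat).
    { induction c as [|c IH]; intros t. { rewrite Nat.mul_0_l, Nat.add_0_r. reflexivity. }
      rewrite Nat.mul_succ_l.
      replace (i + t + (c * (j - i) + (j - i)))%nat with (j + (t + c*(j-i)))%nat by lia.
      rewrite <- Hshift. replace (i + (t + c * (j - i)))%nat with (i + t + c*(j-i))%nat by lia.
      apply IH. }
    assert (Hzero : forall t, d (Y (i+t)%nat) (Y (S (i+t))) = 0).
    { intros t. destruct (Rle_lt_or_eq_dec 0 _ (Hd0 (Y (i+t)%nat) (Y (S (i+t))))) as [Hp|Hq]; [|auto].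
      destruct (Hsmall (d (Y (i+t)%nat) (Y (S (i+t))) / 2) ltac:(lra)) as [N HN].
      set (n' := (i + t + N*(j-i))%nat).
      assert (Hn' : (N <= n')%nat) by (unfold n'; assert (1 <= j - i)%nat by lia; set (z := (j-i)%nat) in *; nia).
      destruct (HN n' Hn') as [H1 _].
      unfold n' in H1. rewrite Hper in H1.
      replace (S (i + t + N * (j - i))) with (i + S t + N*(j-i))%nat in H1 by lia.
      rewrite Hper in H1. replace (i + S t)%nat with (S (i+t)) in H1 by lia. lra. }
    assert (Hconst : forall t, Y (i+t)%nat = Y i).
    { induction t as [|t IH]. { rewrite Nat.add_0_r; reflexivity. }
      rewrite <- plus_n_Sm. rewrite <- IH. symmetry. apply Hdeq. apply Hzero. }
    intros eps He. exists i. intros n Hn k.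
    replace n with (i + (n-i))%nat by lia. rewrite Hconst.
    replace (i + (n - i) + 1 + k)%nat with (i + (n-i+1+k))%nat by lia. rewrite Hconst.
    rewrite (proj2 (Hdeq _ _) eq_refl). lra.
  - assert (injY : forall i j, Y i = Y j -> i = j).
    { intros i j E. destruct (lt_eq_lt_dec i j) as [[l|e]|l]; auto.
      - exfalso; apply NI; eauto.
      - exfalso; apply NI; eauto. }
    apply NNPP; intro Hnc.
    assert (Hbad0 : exists eps, 0 < eps /\ forall N, exists n j, (N <= n)%nat /\
              eps < d (Y n) (Y (n+1+j)%nat)).
    { apply NNPP; intro C; apply Hnc; intros eps Heps; apply NNPP; intro C3.
      apply C; exists eps; split; auto; intro N; apply NNPP; intro C4; apply C3.
      exists N; intros n Hn j; apply Rnot_lt_le; intro; apply C4; exists n, j; auto. }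
    destruct Hbad0 as (eps & Heps & Hbad).
    destruct (Hi eps Heps) as (delta & N0 & Hdelta & Hi').
    set (eta := delta / 2).
    set (alpha := Rmin eps eta / INR (S nu)).
    assert (HSnu : 0 < INR (S nu)) by (apply lt_0_INR; lia).
    assert (Hmin : 0 < Rmin eps eta) by (apply Rmin_glb_lt; unfold eta; lra).
    assert (Halpha : 0 < alpha) by (unfold alpha; apply Rdiv_lt_0_compat; lra).
    assert (Hal : INR (S nu) * alpha = Rmin eps eta) by (unfold alpha; field; lra).
    pose proof (Rmin_l eps eta). pose proof (Rmin_r eps eta).
    destruct (Hsmall alpha Halpha) as [N1 HN1].
    assert (KL : forall M, exists PQ : nat * nat, (M <= fst PQ)%nat /\ (M <= snd PQ)%nat /\
              eps + delta <= m (Y (fst PQ)) (Y (snd PQ)) /\ d (Y (fst PQ)) (Y (snd PQ)) <= eps + eta).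
    { intros M.
      destruct (Hbad (S (Nat.max M (Nat.max N0 N1)))) as (n & j & Hn & Hd).
      destruct (min_ex (fun q => (n < q)%nat /\ eps < d (Y n) (Y q)) (n+1+j)%nat
                  (conj (ltac:(lia) : (n < n+1+j)%nat) Hd)) as (q & [Hnq Hdq] & Hmq).
      assert (Hfar : (n + S nu < q)%nat).
      { destruct (Nat.lt_ge_cases (n + S nu) q) as [|Hc]; auto. exfalso.
        pose proof (hairpin nu d Y N1 alpha Hg injY HN1 n (q - n) ltac:(lia) ltac:(lia)) as Hh.
        replace (n + (q-n))%nat with q in Hh by lia. lra. }
      assert (Hmid : forall r, (n < r < q)%nat -> d (Y n) (Y r) <= eps).
      { intros r Hr. apply Rnot_lt_le. intro C. apply (Hmq r ltac:(lia)). split; auto; lia. }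
      exists (pred n, pred q). simpl. split; [lia|]. split; [lia|]. split.
      - apply Rnot_lt_le. intro C.
        assert (C' : m (Y (pred n)) (Y (pred q)) < delta + eps) by lra.
        pose proof (Hi' (pred n) (pred q) ltac:(lia) ltac:(lia) C') as Hc.
        replace (S (pred n)) with n in Hc by lia. replace (S (pred q)) with q in Hc by lia.
        fold (Y n) (Y q) in Hc. lra.
      - destruct nu as [|nu']; [lia|].
        set (h := fun i => if Nat.eqb i 0 then pred n else if Nat.eqb i 1 then n
                          else (q - S (S nu') - 1 + i)%nat).
        pose proof (tri_lemma (S nu') d (fun i => Y (h i)) Hg) as Tr.
        cbv beta in Tr.
        assert (E0 : h 0%nat = pred n) by reflexivity.
        assert (E1 : h (S (S nu')) = pred q) by (unfold h; bdestr; lia).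
        rewrite E0, E1 in Tr.
        eapply Rle_trans; [apply Tr|].
        { intros i0 j0 Hi0 Hj0 E. apply injY in E. revert E. unfold h. bdestr; lia. }
        change (path_len d (map (fun i => Y (h i)) (seq 0 (S (S (S nu'))))))
          with (d (Y (h 0%nat)) (Y (h 1%nat)) + (d (Y (h 1%nat)) (Y (h 2%nat)) +
                path_len d (map (fun i => Y (h i)) (seq 2 (S nu'))))).
        assert (S0 : d (Y (h 0%nat)) (Y (h 1%nat)) <= alpha).
        { rewrite E0. replace (h 1%nat) with (S (pred n)) by (unfold h; simpl; lia).
          apply HN1; lia. }
        assert (S1 : d (Y (h 1%nat)) (Y (h 2%nat)) <= eps).
        { replace (h 1%nat) with n by reflexivity. apply Hmid. unfold h; simpl; lia. }
        assert (S2 : path_len d (map (fun i => Y (h i)) (seq 2 (S nu'))) <= INR nu' * alpha).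
        { apply path_map_seq. intros i0 Hi0.
          replace (h (S i0)) with (S (h i0)) by (unfold h; bdestr; lia).
          apply HN1. unfold h; bdestr; lia. }
        rewrite !S_INR in Hal.
        assert (INR nu' * alpha + alpha + alpha <= eta) by nra.
        lra. }
    set (g := fun M => proj1_sig (constructive_indefinite_description _ (KL M))).
    assert (Hg' : forall M, (M <= fst (g M))%nat /\ (M <= snd (g M))%nat /\
              eps + delta <= m (Y (fst (g M))) (Y (snd (g M))) /\
              d (Y (fst (g M))) (Y (snd (g M))) <= eps + eta).
    { intros M. unfold g. destruct (constructive_indefinite_description _ (KL M)) as [PQ HPQ].
      exact HPQ. }
    set (s := buildseq g).
    assert (Hs : forall i, exists M, s i = g M) by (intros [|k]; eexists; reflexivity).
    assert (Hp : strictly_increasing (fun i => fst (s i))).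
    { intros k. change (s (S k)) with (g (S (Nat.max (fst (s k)) (snd (s k))))). pose proof (Hg' (S (Nat.max (fst (s k)) (snd (s k))))). lia. }
    assert (Hq : strictly_increasing (fun i => snd (s i))).
    { intros k. change (s (S k)) with (g (S (Nat.max (fst (s k)) (snd (s k))))). pose proof (Hg' (S (Nat.max (fst (s k)) (snd (s k))))). lia. }
    refine (final_contra _ _ (eps + delta) (eps + eta) _ _ _ _ (Hii _ _ Hp Hq));
      [| | | unfold eta; lra].
    + intros k. destruct (Hs k) as [M HM]. rewrite HM. apply Hg'.
    + intros k. destruct (Hs k) as [M HM]. rewrite HM. apply Hg'.
    + intros k. apply Hd0.
Qed.
Print Assumptions theorem3p3.
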